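(* Up to multiplication by a positive integer, every basic weight of a basic system of type $B$ is one of the following (coordinates $\lambda_k=\langle\lambda,e_k\rangle$): (1) $(B_2,1,1)$: $(0,1)$; (2) $(B_2,1,2)$: $(\tfrac12,\tfrac12)$, $(-\tfrac12,\tfrac12)$; (3) $(B_2,2,1)$: $(1,0)$, $(0,-1)$; (4) $(B_2,2,2)$: $(\tfrac12,-\tfrac12)$; (5) $(B_3,2,2)$: $(1,0,1)$, $(0,-1,1)$; (6) $(B_3,2,3)$: $(\tfrac12,-\tfrac12,\tfrac12)$; (7) $(B_3,3,2)$: $(1,0,-1)$; (8) $(B_4,3,3)$: $(1,0,-1,1)$.
   Context: $B_n$ is realized in $\mathbb R^n$ with orthonormal basis $e_1,\dots,e_n$ and standard inner product, simple roots $\alpha_k=e_k-e_{k+1}$ ($k<n$), $\alpha_n=e_n$. Let $W$ be the Weyl group, $\alpha^\vee=2\alpha/\langle\alpha,\alpha\rangle$. A weight is integral if $\langle\lambda,\alpha^\vee\rangle\in\mathbb Z$ for all roots $\alpha$; $\overline\lambda$ is the dominant weight in $W\lambda$. For $I=\Delta\setminus\{\alpha_i\}$, $J=\Delta\setminus\{\alpha_j\}$, a basic weight of $(\Phi,i,j)$ is an integral $\lambda$ with $\langle\lambda,\alpha^\vee\rangle\in\mathbb Z_{>0}$ for all $\alpha\in I$ and $\{\alpha\in\Delta:\langle\overline\lambda,\alpha\rangle=0\}=J$; $(\Phi,i,j)$ is a basic system if it has a basic weight. *)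

(* Defs.v *)
From mathcomp Require Import all_boot all_order all_algebra.
Set Implicit Arguments. Unset Strict Implicit. Unset Printing Implicit Defensive.
Import Order.TTheory GRing.Theory Num.Theory.
Local Open Scope ring_scope.

Section BRoot.
Variables (R : realFieldType) (n : nat).
Local Notation vec := 'rV[R]_n.

Definition ip (u v : vec) : R := \sum_(k < n) u 0 k * v 0 k.

(* standard basis vector e_k (0-based index) *)
Definition ev (k : 'I_n) : vec := \row_(l < n) (if l == k then 1 else 0).

Definition rootB (a : vec) : Prop :=
  (exists (k l : 'I_n) (s t : bool), k != l /\
     a = (-1) ^+ s *: ev k + (-1) ^+ t *: ev l) \/
  (exists (k : 'I_n) (s : bool), a = (-1) ^+ s *: ev k).

Definition coroot (a : vec) : vec := (2 / ip a a) *: a.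

Definition is_int (x : R) : Prop := exists z : int, x = z%:~R.
Definition is_posint (x : R) : Prop := exists m : nat, (0 < m)%N /\ x = m%:R.

Definition integral (l : vec) : Prop := forall a, rootB a -> is_int (ip l (coroot a)).

Definition refl (a v : vec) : vec := v - ip v (coroot a) *: a.

Definition in_orbit (lam mu : vec) : Prop :=
  exists s : seq vec, (forall a, a \in s -> rootB a) /\ mu = foldr refl lam s.
End BRoot.

(* simple roots, 1-based index k in 1..n:
   alpha_k = e_k - e_(k+1) (k < n), alpha_n = e_n *)
Definition simple_root (R : realFieldType) (n k : nat) : 'rV[R]_n :=
  if (k < n)%N then
    \row_(l < n) (if (l == k.-1 :> nat) then 1 else if (l == k :> nat) then -1 else 0)
  else \row_(l < n) (if (l == n.-1 :> nat) then 1 else 0).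

Definition dominant (R : realFieldType) (n : nat) (mu : 'rV[R]_n) : Prop :=
  forall k, (1 <= k <= n)%N -> 0 <= ip mu (simple_root R n k).

(* basic weight of (B_n, i, j); I = Delta \ {alpha_i}, J = Delta \ {alpha_j};
   overline lambda is the (unique) dominant element of W lambda *)
Definition basic_weight (R : realFieldType) (n i j : nat) (lam : 'rV[R]_n) : Prop :=
  integral lam /\
  (forall k, (1 <= k <= n)%N -> k != i ->
      is_posint (ip lam (coroot (simple_root R n k)))) /\
  (exists mu, in_orbit lam mu /\ dominant mu /\
     forall k, (1 <= k <= n)%N ->
       (ip mu (simple_root R n k) = 0 <-> k != j)).

Definition basic_system (R : realFieldType) (n i j : nat) : Prop :=
  exists lam : 'rV[R]_n, @basic_weight R n i j lam.

Definition vec_of (R : realFieldType) (n : nat) (s : seq R) : 'rV[R]_n :=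
  \row_(k < n) nth 0 s k.

Definition listedB (R : realFieldType) (n i j : nat) (mu : 'rV[R]_n) : Prop :=
  let h : R := 2^-1 in
  ((n, i, j) = (2, 1, 1)%N /\ mu = vec_of n [:: 0; 1]
   \/ (n, i, j) = (2, 1, 2)%N /\ (mu = vec_of n [:: h; h] \/ mu = vec_of n [:: -h; h])
   \/ (n, i, j) = (2, 2, 1)%N /\ (mu = vec_of n [:: 1; 0] \/ mu = vec_of n [:: 0; -1])
   \/ (n, i, j) = (2, 2, 2)%N /\ mu = vec_of n [:: h; -h]
   \/ (n, i, j) = (3, 2, 2)%N /\ (mu = vec_of n [:: 1; 0; 1] \/ mu = vec_of n [:: 0; -1; 1])
   \/ (n, i, j) = (3, 2, 3)%N /\ mu = vec_of n [:: h; -h; h]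
   \/ (n, i, j) = (3, 3, 2)%N /\ mu = vec_of n [:: 1; 0; -1]
   \/ (n, i, j) = (4, 3, 3)%N /\ mu = vec_of n [:: 1; 0; -1; 1]).

(* Main.v *)
Require Import Defs.
From mathcomp Require Import all_boot all_order all_algebra.
From mathcomp Require Import fingroup perm ring lra zify.
Require Import Defs.
Set Implicit Arguments. Unset Strict Implicit. Unset Printing Implicit Defensive.
Import Order.TTheory GRing.Theory Num.Theory.
Local Open Scope ring_scope.

Section Infra.
Variables (R : realFieldType) (n : nat).
Local Notation vec := 'rV[R]_n.

Lemma ipDr (u v w : vec) : ip u (v + w) = ip u v + ip u w.
Proof. rewrite /ip -big_split; by apply: eq_bigr => k _; rewrite mxE mulrDr. Qed.
Lemma ipZr (u : vec) c v : ip u (c *: v) = c * ip u v.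
Proof. rewrite /ip mulr_sumr; by apply: eq_bigr => k _; rewrite mxE mulrCA. Qed.
Lemma ipC (u v : vec) : ip u v = ip v u.
Proof. by apply: eq_bigr => k _; rewrite mulrC. Qed.
Lemma ipDl (u v w : vec) : ip (v + w) u = ip v u + ip w u.
Proof. by rewrite ipC ipDr ipC [ip u w]ipC. Qed.
Lemma ipZl (u : vec) c v : ip (c *: v) u = c * ip v u.
Proof. by rewrite ipC ipZr ipC. Qed.
Lemma ip_ev (u : vec) k : ip u (ev R k) = u 0 k.
Proof.
rewrite /ip (bigD1 k) //= big1 => [|l /negbTE H]; rewrite !mxE ?eqxx ?H ?mulr1 ?mulr0 ?addr0 //.
Qed.
Lemma ev_ev k l : ip (ev R k : vec) (ev R l) = if k == l then 1 else 0.
Proof. by rewrite ip_ev !mxE eq_sym. Qed.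

Lemma sign_sq (s : bool) : ((-1) ^+ s : R) * (-1) ^+ s = 1.
Proof. by case: s; rewrite /= ?expr0 ?expr1 ?mulr1 ?mulrNN ?mulr1. Qed.

Lemma refl1 k c (v : vec) m : c * c = 1 ->
  refl (c *: ev R k) v 0 m = if m == k then - v 0 k else v 0 m.
Proof.
move=> cc; rewrite /refl /coroot !mxE ipZl ipZr !ipZr ev_ev eqxx ip_ev mulr1 cc.
case: eqP => [->|_]; rewrite ?mulr1 ?mulr0 ?subr0 //.
rewrite divr1; have -> : 2 * (c * v 0 k) * c = 2 * (c * c) * v 0 k by ring.
rewrite cc; ring.
Qed.

Lemma refl2 k l c d (v : vec) m : c * c = 1 -> d * d = 1 -> k != l ->
  refl (c *: ev R k + d *: ev R l) v 0 m =
  if m == k then - (c * d) * v 0 l else if m == l then - (c * d) * v 0 k else v 0 m.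
Proof.
move=> cc dd kl.
have aa : ip (c *: ev R k + d *: ev R l) (c *: ev R k + d *: ev R l : vec) = 2.
  have lk : l != k by rewrite eq_sym.
  rewrite !ipDl !ipDr !ipZl !ipZr !ev_ev !eqxx (negbTE lk) (negbTE kl) !mulr0 addr0 add0r !mulr1 cc dd //.
rewrite /refl /coroot aa divff ?pnatr_eq0 // scale1r !mxE ipDr !ipZr !ip_ev.
case: (eqVneq m k) => [->|mk].
  rewrite (negbTE kl) mulr0 addr0 mulr1.
  have -> : (c * v 0 k + d * v 0 l) * c = (c * c) * v 0 k + c * d * v 0 l by ring.
  rewrite cc; ring.
rewrite mulr0 add0r; case: (eqVneq m l) => [->|ml]; last by rewrite !mulr0 subr0.
rewrite mulr1.
have -> : (c * v 0 k + d * v 0 l) * d = c * d * v 0 k + (d * d) * v 0 l by ring.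
rewrite dd; ring.
Qed.

Lemma orbit_sq (lam mu : 'rV[R]_n) : in_orbit lam mu ->
  exists s : 'S_n, forall m, mu 0 m ^+ 2 = lam 0 (s m) ^+ 2.
Proof.
case=> s [Hs ->]; elim: s Hs => [|a s IH] Hs /=.
  by exists 1%g => m; rewrite perm1.
have [sg Hsg] := IH (fun b hb => Hs b (@mem_behead _ (a :: s) b hb)).
case: (Hs a (mem_head _ _)) => [[k [l [s1 [t [kl ->]]]]] | [k [s1 ->]]].
  exists (tperm k l * sg)%g => m; rewrite refl2 ?sign_sq // permM.
  case: tpermP => [->|->|/eqP mk /eqP ml]; rewrite ?eqxx ?(negbTE mk) ?(negbTE ml).
  - rewrite exprMn sqrrN exprMn !expr2 !sign_sq mulr1 mul1r -expr2 Hsg //.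
  - rewrite eq_sym (negbTE kl) exprMn sqrrN exprMn !expr2 !sign_sq mulr1 mul1r -expr2 Hsg //.
  - by rewrite Hsg.
exists sg => m; rewrite refl1 ?sign_sq //.
case: eqP => [->|_]; by rewrite ?sqrrN Hsg.
Qed.

End Infra.

Section SR.
Variables (R : realFieldType) (n : nat).
Local Notation vec := 'rV[R]_n.+1.

Lemma sr_lt k : (0 < k <= n)%N ->
  simple_root R n.+1 k = ev R (inord k.-1) - ev R (inord k).
Proof.
move=> /andP [k0 kn]; apply/rowP => l; rewrite /simple_root.
have kn' : (k < n.+1)%N := kn. rewrite kn' !mxE.
rewrite -!(inj_eq val_inj) /= !inordK; last 2 first.
- by [].
- by apply: leq_trans (leq_pred k) _.
case: eqP => [->|h1].
  have -> : (k.-1 == k) = false by apply/eqP; lia.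
  by rewrite subr0.
case: eqP => _; by rewrite ?sub0r ?subr0 ?oppr0.
Qed.


Lemma sr_n : simple_root R n.+1 n.+1 = ev R (inord n).
Proof.
apply/rowP => l; rewrite /simple_root ltnn !mxE -!(inj_eq val_inj) /= inordK //.
Qed.

Lemma ip_sr_lt (v : vec) k : (0 < k <= n)%N ->
  ip v (simple_root R n.+1 k) = v 0 (inord k.-1) - v 0 (inord k).
Proof. by move=> h; rewrite sr_lt // ipDr -scaleN1r ipZr !ip_ev mulN1r. Qed.

Lemma ip_sr_n (v : vec) : ip v (simple_root R n.+1 n.+1) = v 0 (inord n).
Proof. by rewrite sr_n ip_ev. Qed.

Lemma ipc_lt (v : vec) k : (0 < k <= n)%N ->
  ip v (coroot (simple_root R n.+1 k)) = v 0 (inord k.-1) - v 0 (inord k).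
Proof.
move=> h.
have ne : (@inord n k.-1 == inord k) = false.
  move: h => /andP [k0 kn].
  rewrite -(inj_eq val_inj) /= !inordK ?ltnS //; last by apply: leq_trans (leq_pred k) _.
  apply/eqP; lia.
rewrite /coroot ipZr ip_sr_lt // sr_lt // !mxE eqxx ne eq_sym ne eqxx ipDr -scaleN1r ipZr !ip_ev.
have -> : ((1 - 0) - (0 - 1) : R) = 2 by ring.
by rewrite divff ?pnatr_eq0 // mul1r mulN1r.
Qed.

Lemma ipc_n (v : vec) :
  ip v (coroot (simple_root R n.+1 n.+1)) = 2 * v 0 (inord n).
Proof. by rewrite /coroot ipZr sr_n ev_ev eqxx divr1 ip_ev. Qed.

End SR.

Set Bullet Behavior "Strict Subproofs".
Ltac eqsyn := apply: (congr1 (vec_of _)); reflexivity.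
Ltac lst := solve [ split; [reflexivity | first [eqsyn | left; eqsyn | right; eqsyn]] | left; lst | right; lst ].
Ltac sp H4 k E := case: (H4 k isT) => [E|[E|E]].
Ltac fin m s := exists m, s; split; [done | split; [lst | case=> [|[|[|[|?]]]] //= _; lra]].



Lemma Lpos (R : realFieldType) (a v : R) : 0 < a -> (v = a \/ v = 0 \/ v = -a) -> 0 < v -> v = a.
Proof. move=> Ha [->|[->|->]] h //; lra. Qed.

Lemma L2 (R : realFieldType) (a u v : R) : 0 < a ->
  (u = a \/ u = 0 \/ u = -a) -> (v = a \/ v = 0 \/ v = -a) -> v < u ->
  (u = a /\ v = 0) \/ (u = 0 /\ v = -a) \/ (u = a /\ v = -a).
Proof.
move=> Ha [->|[->|->]] [->|[->|->]] h; try (exfalso; lra).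
all: first [by left | by right; left | by right; right].
Qed.

Lemma L3 (R : realFieldType) (a u v w : R) : 0 < a ->
  (u = a \/ u = 0 \/ u = -a) -> (v = a \/ v = 0 \/ v = -a) ->
  (w = a \/ w = 0 \/ w = -a) -> v < u -> w < v -> u = a /\ v = 0 /\ w = -a.
Proof.
move=> Ha Su Sv Sw h1 h2.
move: (L2 Ha Su Sv h1) (L2 Ha Sv Sw h2) => [[E1 E2]|[[E1 E2]|[E1 E2]]] [[F1 F2]|[[F1 F2]|[F1 F2]]];
  (split; [|split]); lra.
Qed.

Section Cases.
Variables (R : realFieldType) (x : nat -> R) (a : R).
Hypothesis Ha : 0 < a.
Let Ha2 : 0 < a ^+ 2 := exprn_gt0 2 Ha.
Let z2 : (0 : R) ^+ 2 = 0. Proof. by rewrite expr2 mul0r. Qed.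

Lemma L21 j : (0 < j <= 2)%N ->
  (forall k, (k <= 1)%N -> x k = a \/ x k = 0 \/ x k = -a) ->
  \sum_(0 <= k < 2) x k ^+ 2 = \sum_(0 <= m < 2) (if (m < j)%N then a else 0) ^+ 2 ->
  (exists m, (0 < m)%N /\ 0 < m%:R :> R /\ 2 * x 1%N = m%:R) ->
  is_int (x 0%N + x 1%N) ->
  exists c s, (0 < c)%N /\ @listedB R 2 1 j (vec_of 2 s) /\
     forall k, (k <= 1)%N -> x k = c%:R * nth 0 s k.
Proof.
have Ha' : (0:R) < a := Ha. have Hb : (0:R) < a ^+ 2 := Ha2.
move=> Hj H4 H5 [m [m0 [mp Hm]]] H3.
have E1 : x 1%N = a by apply: (Lpos Ha' (H4 1%N isT)); lra.
rewrite E1 in Hm.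
have [Ej|Ej] : j = 1%N \/ j = 2%N by lia.
- subst j; rewrite unlock /= in H5.
  sp H4 0%N E0; rewrite ?E0 ?E1 ?sqrrN ?z2 in H5; try (exfalso; lra).
  case: H3 => z; rewrite E0 E1 => Hz.
  have zp : (0 < z)%R by rewrite -(ltr0z R) -Hz; lra.
  case: z Hz zp => [c|c] Hz zp //.
  have c0 : (0 < c)%N by lia.
  rewrite -pmulrn in Hz.
  fin c ([:: 0; 1] : seq R).
- subst j; rewrite unlock /= in H5.
  sp H4 0%N E0; rewrite ?E0 ?E1 ?sqrrN ?z2 in H5; try (exfalso; lra).
  all: first [fin m ([:: 2^-1; 2^-1] : seq R) | fin m ([:: - 2^-1; 2^-1] : seq R)].
Qed.

Lemma L22 j : (0 < j <= 2)%N ->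
  (forall k, (k <= 1)%N -> x k = a \/ x k = 0 \/ x k = -a) ->
  \sum_(0 <= k < 2) x k ^+ 2 = \sum_(0 <= m < 2) (if (m < j)%N then a else 0) ^+ 2 ->
  (exists m, (0 < m)%N /\ 0 < m%:R :> R /\ x 0%N - x 1%N = m%:R) ->
  exists c s, (0 < c)%N /\ @listedB R 2 2 j (vec_of 2 s) /\
     forall k, (k <= 1)%N -> x k = c%:R * nth 0 s k.
Proof.
have Ha' : (0:R) < a := Ha. have Hb : (0:R) < a ^+ 2 := Ha2.
move=> Hj H4 H5 [m [m0 [mp Hm]]].
have := L2 Ha' (H4 0%N isT) (H4 1%N isT) ltac:(lra).
move=> [[E0 E1]|[[E0 E1]|[E0 E1]]]; rewrite E0 E1 in Hm;
(have [Ej|Ej] : j = 1%N \/ j = 2%N by lia); subst j; rewrite unlock /= in H5;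
  rewrite ?E0 ?E1 ?sqrrN ?z2 in H5; try (exfalso; lra).
all: first [fin m ([:: 1; 0] : seq R) | fin m ([:: 0; -1] : seq R) | fin m ([:: 2^-1; - 2^-1] : seq R)].
Qed.

Lemma L32 j : (0 < j <= 3)%N ->
  (forall k, (k <= 2)%N -> x k = a \/ x k = 0 \/ x k = -a) ->
  \sum_(0 <= k < 3) x k ^+ 2 = \sum_(0 <= m < 3) (if (m < j)%N then a else 0) ^+ 2 ->
  (exists m, (0 < m)%N /\ 0 < m%:R :> R /\ x 0%N - x 1%N = m%:R) ->
  (exists m, (0 < m)%N /\ 0 < m%:R :> R /\ 2 * x 2%N = m%:R) ->
  exists c s, (0 < c)%N /\ @listedB R 3 2 j (vec_of 3 s) /\
     forall k, (k <= 2)%N -> x k = c%:R * nth 0 s k.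
Proof.
have Ha' : (0:R) < a := Ha. have Hb : (0:R) < a ^+ 2 := Ha2.
move=> Hj H4 H5 [m [m0 [mp Hm]]] [m' [m0' [mp' Hm']]].
have E2 : x 2%N = a by apply: (Lpos Ha' (H4 2%N isT)); lra.
have := L2 Ha' (H4 0%N isT) (H4 1%N isT) ltac:(lra).
move=> [[E0 E1]|[[E0 E1]|[E0 E1]]]; rewrite E0 E1 in Hm;
(have [Ej|[Ej|Ej]] : j = 1%N \/ j = 2%N \/ j = 3%N by lia); subst j; rewrite unlock /= in H5;
  rewrite ?E0 ?E1 ?E2 ?sqrrN ?z2 in H5; try (exfalso; lra).
all: first [fin m ([:: 1; 0; 1] : seq R) | fin m ([:: 0; -1; 1] : seq R) | fin m ([:: 2^-1; - 2^-1; 2^-1] : seq R)].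
Qed.

Lemma L33 j : (0 < j <= 3)%N ->
  (forall k, (k <= 2)%N -> x k = a \/ x k = 0 \/ x k = -a) ->
  \sum_(0 <= k < 3) x k ^+ 2 = \sum_(0 <= m < 3) (if (m < j)%N then a else 0) ^+ 2 ->
  (exists m, (0 < m)%N /\ 0 < m%:R :> R /\ x 0%N - x 1%N = m%:R) ->
  (exists m, (0 < m)%N /\ 0 < m%:R :> R /\ x 1%N - x 2%N = m%:R) ->
  exists c s, (0 < c)%N /\ @listedB R 3 3 j (vec_of 3 s) /\
     forall k, (k <= 2)%N -> x k = c%:R * nth 0 s k.
Proof.
have Ha' : (0:R) < a := Ha. have Hb : (0:R) < a ^+ 2 := Ha2.
move=> Hj H4 H5 [m [m0 [mp Hm]]] [m' [m0' [mp' Hm']]].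
have [E0 [E1 E2]] := L3 Ha' (H4 0%N isT) (H4 1%N isT) (H4 2%N isT) ltac:(lra) ltac:(lra).
rewrite E0 E1 in Hm.
(have [Ej|[Ej|Ej]] : j = 1%N \/ j = 2%N \/ j = 3%N by lia); subst j; rewrite unlock /= in H5;
  rewrite ?E0 ?E1 ?E2 ?sqrrN ?z2 in H5; try (exfalso; lra).
fin m ([:: 1; 0; -1] : seq R).
Qed.

Lemma L43 j : (0 < j <= 4)%N ->
  (forall k, (k <= 3)%N -> x k = a \/ x k = 0 \/ x k = -a) ->
  \sum_(0 <= k < 4) x k ^+ 2 = \sum_(0 <= m < 4) (if (m < j)%N then a else 0) ^+ 2 ->
  (exists m, (0 < m)%N /\ 0 < m%:R :> R /\ x 0%N - x 1%N = m%:R) ->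
  (exists m, (0 < m)%N /\ 0 < m%:R :> R /\ x 1%N - x 2%N = m%:R) ->
  (exists m, (0 < m)%N /\ 0 < m%:R :> R /\ 2 * x 3%N = m%:R) ->
  exists c s, (0 < c)%N /\ @listedB R 4 3 j (vec_of 4 s) /\
     forall k, (k <= 3)%N -> x k = c%:R * nth 0 s k.
Proof.
have Ha' : (0:R) < a := Ha. have Hb : (0:R) < a ^+ 2 := Ha2.
move=> Hj H4 H5 [m [m0 [mp Hm]]] [m' [m0' [mp' Hm']]] [m'' [m0'' [mp'' Hm'']]].
have [E0 [E1 E2]] := L3 Ha' (H4 0%N isT) (H4 1%N isT) (H4 2%N isT) ltac:(lra) ltac:(lra).
have E3 : x 3%N = a by apply: (Lpos Ha' (H4 3%N isT)); lra.
rewrite E0 E1 in Hm.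
(have [Ej|[Ej|[Ej|Ej]]] : j = 1%N \/ j = 2%N \/ j = 3%N \/ j = 4%N by lia); subst j; rewrite unlock /= in H5;
  rewrite ?E0 ?E1 ?E2 ?E3 ?sqrrN ?z2 in H5; try (exfalso; lra).
fin m ([:: 1; 0; -1; 1] : seq R).
Qed.
End Cases.

Lemma core (R : realFieldType) (n i j : nat) (x : nat -> R) (a : R) :
  (0 < n)%N -> (0 < i <= n.+1)%N -> (0 < j <= n.+1)%N ->
  (forall k, (0 < k <= n)%N -> k != i ->
     exists m, (0 < m)%N /\ 0 < m%:R :> R /\ x k.-1 - x k = m%:R) ->
  (n.+1 != i -> exists m, (0 < m)%N /\ 0 < m%:R :> R /\ 2 * x n = m%:R) ->
  is_int (x 0%N + x 1%N) ->
  0 < a ->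
  (forall k, (k <= n)%N -> x k = a \/ x k = 0 \/ x k = -a) ->
  \sum_(0 <= k < n.+1) x k ^+ 2 = \sum_(0 <= m < n.+1) (if (m < j)%N then a else 0) ^+ 2 ->
  exists c s, (0 < c)%N /\ @listedB R n.+1 i j (vec_of n.+1 s) /\
     forall k, (k <= n)%N -> x k = c%:R * nth 0 s k.
Proof.
move=> n0 /andP [i0 iN] /andP [j0 jN] H1 H2 H3 Ha H4 H5.
have Ha2 : 0 < a ^+ 2 := exprn_gt0 2 Ha.
have i3 : (i <= 3)%N.
  rewrite leqNgt; apply/negP => i4.
  have [m1 [_ [p1 e1]]] := H1 1%N ltac:(lia) ltac:(lia).
  have [m2 [_ [p2 e2]]] := H1 2%N ltac:(lia) ltac:(lia).
  have [m3 [_ [p3 e3]]] := H1 3%N ltac:(lia) ltac:(lia).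
  simpl in e1, e2, e3.
  have [_ [A _]] := L3 Ha (H4 0%N ltac:(lia)) (H4 1%N ltac:(lia)) (H4 2%N ltac:(lia))
     ltac:(lra) ltac:(lra).
  have [B _] := L3 Ha (H4 1%N ltac:(lia)) (H4 2%N ltac:(lia)) (H4 3%N ltac:(lia))
     ltac:(lra) ltac:(lra).
  lra.
have ni : (n <= i)%N.
  rewrite leqNgt; apply/negP => lt.
  have [m1 [_ [p1 e1]]] := H1 n ltac:(lia) ltac:(lia).
  have [m2 [_ [p2 e2]]] := H2 ltac:(lia).
  have F := Lpos Ha (H4 n ltac:(lia)) ltac:(lra).
  have E := Lpos Ha (H4 n.-1 ltac:(lia)) ltac:(lra).
  lra.
have Hj : (0 < j <= n.+1)%N by rewrite j0 jN.
have [En|[En|En]] : n = 1%N \/ n = 2%N \/ n = 3%N by lia.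
- subst n.
  have [Ei|Ei] : i = 1%N \/ i = 2%N by lia.
  + subst i. exact: (@L21 R x a Ha j Hj H4 H5 (H2 isT) H3).
  + subst i. exact: (@L22 R x a Ha j Hj H4 H5 (H1 1%N isT isT)).
- subst n.
  have [Ei|Ei] : i = 2%N \/ i = 3%N by lia.
  + subst i. exact: (@L32 R x a Ha j Hj H4 H5 (H1 1%N isT isT) (H2 isT)).
  + subst i. exact: (@L33 R x a Ha j Hj H4 H5 (H1 1%N isT isT) (H1 2%N isT isT)).
- subst n.
  have Ei : i = 3%N by lia.
  subst i. exact: (@L43 R x a Ha j Hj H4 H5 (H1 1%N isT isT) (H1 2%N isT isT) (H2 isT)).
Qed.

Lemma muform (R : realFieldType) n j (y : nat -> R) : (0 < j <= n.+1)%N ->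
  (forall k, (0 < k <= n)%N -> 0 <= y k.-1 - y k /\ (y k.-1 - y k = 0 <-> k != j)) ->
  0 <= y n /\ (y n = 0 <-> n.+1 != j) ->
  0 < y 0%N /\ forall m, (m <= n)%N -> y m = if (m < j)%N then y 0%N else 0.
Proof.
move=> /andP [j0 jN] H1 [H2 H2'].
have A : forall m, (m < j)%N -> (m <= n)%N -> y m = y 0%N.
  elim=> [//|m IH] mj mn.
  have [_ [_ E]] := H1 m.+1 ltac:(lia).
  have := E ltac:(apply/eqP; lia); rewrite /= => E'.
  rewrite -(IH ltac:(lia) ltac:(lia)); lra.
have B : forall d m, (m + d)%N = n -> (j <= m)%N -> y m = y n.
  elim=> [|d IH] m md jm; first by rewrite -md addn0.
  have [_ [_ E]] := H1 m.+1 ltac:(lia).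
  have := E ltac:(apply/eqP; lia); rewrite /= => E'.
  rewrite -(IH m.+1 ltac:(lia) ltac:(lia)); lra.
have [jn|jn] : (j <= n)%N \/ j = n.+1 by lia.
- have yn : y n = 0 by apply/H2'; apply/eqP; lia.
  split.
  + have [D [E _]] := H1 j ltac:(lia).
    have ne : y j.-1 - y j <> 0 by move=> /E; rewrite eqxx.
    have e1 := A j.-1 ltac:(lia) ltac:(lia).
    have e2 := B (n - j)%N j ltac:(lia) (leqnn _).
    rewrite e1 e2 yn in D ne; lra.
  + move=> m mn; case: ifP => mj; first exact: A.
    rewrite (B (n - m)%N m ltac:(lia) ltac:(lia)) //.
- subst j; split.
  + have ne : y n <> 0 by move=> /H2'; rewrite eqxx.
    rewrite -(A n ltac:(lia) (leqnn _)); lra.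
  + by move=> m mn; rewrite ifT ?(A m) //; lia.
Qed.

Lemma sq_cases (R : realFieldType) (u a : R) :
  u ^+ 2 = a ^+ 2 \/ u ^+ 2 = 0 -> u = a \/ u = 0 \/ u = - a.
Proof.
case=> E.
  have : (u - a) * (u + a) = 0 by rewrite -subr_sqr E subrr.
  move/eqP; rewrite mulf_eq0 => /orP [] /eqP h; [left | right; right]; lra.
right; left; apply/eqP; move: E => /eqP; by rewrite expf_eq0.
Qed.

Unset Implicit Arguments.
Theorem theorem5p8 (R : realFieldType) (n i j : nat) (lam : 'rV[R]_n) :
  (2 <= n)%N -> (1 <= i <= n)%N -> (1 <= j <= n)%N ->
  @basic_system R n i j ->
  @basic_weight R n i j lam ->
  exists (c : nat) (mu : 'rV[R]_n),
    (0 < c)%N /\ @listedB R n i j mu /\ lam = c%:R *: mu.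
Proof.
case: n lam => [//|n] lam n2 /andP [i0 iN] /andP [j0 jN] _ [Hint [Hpos [mu [Horb [Hdom Hz]]]]].
have n0 : (0 < n)%N by lia.
pose x := fun k => lam 0 (inord k).
pose y := fun k => mu 0 (inord k).
have H1 : forall k, (0 < k <= n)%N -> k != i ->
     exists m, (0 < m)%N /\ 0 < m%:R :> R /\ x k.-1 - x k = m%:R.
  move=> k hk ki.
  have [m [m0 Hm]] := Hpos k ltac:(lia) ki.
  exists m; split => //; split; first by rewrite ltr0n.
  by rewrite -Hm ipc_lt.
have H2 : n.+1 != i -> exists m, (0 < m)%N /\ 0 < m%:R :> R /\ 2 * x n = m%:R.
  move=> ni.
  have [m [m0 Hm]] := Hpos n.+1 ltac:(lia) ni.
  exists m; split => //; split; first by rewrite ltr0n.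
  by rewrite -Hm ipc_n.
have H3 : is_int (x 0%N + x 1%N).
  have ne : (@inord n 0 != inord 1).
    by rewrite -(inj_eq val_inj) /= !inordK.
  have hr : rootB (ev R (@inord n 0) + ev R (inord 1)).
    by left; exists (inord 0), (inord 1), false, false; rewrite expr0 !scale1r.
  have aa : ip (ev R (@inord n 0) + ev R (inord 1)) (ev R (inord 0) + ev R (inord 1)) = 2.
    rewrite !ipDl !ipDr !ev_ev !eqxx (negbTE ne) eq_sym (negbTE ne).
    by rewrite addr0 add0r.
  have := Hint _ hr.
  by rewrite /coroot aa divff ?pnatr_eq0 // scale1r ipDr !ip_ev.
have D : forall k, (0 < k <= n)%N -> 0 <= y k.-1 - y k /\ (y k.-1 - y k = 0 <-> k != j).
  move=> k hk; rewrite /y -ip_sr_lt //; split; first by apply: Hdom; lia.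
  by apply: Hz; lia.
have Dn : 0 <= y n /\ (y n = 0 <-> n.+1 != j).
  rewrite /y -ip_sr_n; split; first by apply: Hdom; lia.
  by apply: Hz; lia.
have [Ha Hy] := muform (ltac:(lia) : (0 < j <= n.+1)%N) D Dn.
have [s Hs] := orbit_sq Horb.
have Hy' : forall m : 'I_n.+1, mu 0 m = if (m < j)%N then y 0%N else 0.
  move=> m; rewrite -Hy; first by rewrite /y inord_val.
  exact: ltn_ord m.
have H4 : forall k, (k <= n)%N -> x k = y 0%N \/ x k = 0 \/ x k = - y 0%N.
  move=> k kn; apply: sq_cases.
  have := Hs (s^-1 (inord k))%g; rewrite permKV Hy' -/(x k) => <-.
  by case: ifP => _; [left | right; rewrite expr2 mul0r].
have H5 : \sum_(0 <= k < n.+1) x k ^+ 2 =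
          \sum_(0 <= m < n.+1) (if (m < j)%N then y 0%N else 0) ^+ 2.
  rewrite !big_mkord.
  transitivity (\sum_(k < n.+1) lam 0 k ^+ 2).
    by apply: eq_bigr => k _; rewrite /x inord_val.
  rewrite (reindex_inj (@perm_inj _ s)) /=.
  by apply: eq_bigr => k _; rewrite -Hs Hy'.
have [c [sq [c0 [HL Hx]]]] := core n0 (ltac:(lia) : (0 < i <= n.+1)%N)
   (ltac:(lia) : (0 < j <= n.+1)%N) H1 H2 H3 Ha H4 H5.
exists c, (vec_of n.+1 sq); split => //; split => //.
apply/rowP => k; rewrite !mxE.
have := Hx k (ltac:(rewrite -ltnS; exact: ltn_ord k)).
by rewrite /x inord_val.
Qed.
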